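(* Let $\rho\in[0,1]$, let $U_0,U_1$ be random vectors in $\mathbb{R}^d$, let $\Pi\in\mathbb{R}^{d\times d}$ be positive semidefinite (i.e. $v^T\Pi v\ge0$ for all $v\in\mathbb{R}^d$), and let $\Phi:\mathbb{R}\to\mathbb{R}$ be convex and non-increasing. Assume the expectations below are finite for all $\theta$. Then the performative risk $$\mathrm{PR}(\theta)=\rho\,\mathbb{E}\big[\Phi(U_1^T\theta)\big]+(1-\rho)\,\mathbb{E}\big[\Phi\big(-(U_0+\Pi\theta)^T\theta\big)\big]$$ is a convex function of $\theta\in\mathbb{R}^d$.
   Context: This is the performative risk of a linear classifier $f_\theta(x)=x^T\theta$ with convex surrogate loss $\Phi$ in binary classification where $\mathbb{P}_\theta(Y=1)=\rho$ is fixed, class-1 covariates are distributed as $U_1$ (unaffected by the deployed model), and class-0 covariates are distributed as $U_0+\Pi\theta$ (a linear performative shift). Examples of admissible $\Phi$ include the hinge, logistic and exponential losses. *)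

(* Defs.v *)
From HB Require Import structures.
From mathcomp Require Import all_boot all_order all_algebra.
From mathcomp Require Import all_classical all_reals all_analysis.
Set Implicit Arguments. Unset Strict Implicit. Unset Printing Implicit Defensive.
Import Order.TTheory GRing.Theory Num.Theory.
Local Open Scope ring_scope.

Definition convex_real_fun {R : realType} (f : R -> R) : Prop :=
  forall x y t : R, 0 <= t -> t <= 1 ->
    f (t * x + (1 - t) * y) <= t * f x + (1 - t) * f y.

Definition convex_on_Rd {R : realType} (d : nat) (f : 'cV[R]_d -> R) : Prop :=
  forall x y : 'cV[R]_d, forall t : R, 0 <= t -> t <= 1 ->
    f (t *: x + (1 - t) *: y) <= t * f x + (1 - t) * f y.

Definition noninc_real_fun {R : realType} (f : R -> R) : Prop :=
  forall x y : R, x <= y -> f y <= f x.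

Definition psd {R : realType} (d : nat) (Pi : 'M[R]_d) : Prop :=
  forall v : 'cV[R]_d, 0 <= (v^T *m Pi *m v) 0 0.

Definition rvec {dT : measure_display} {T : measurableType dT} {R : realType}
  (P : probability T R) (d : nat) (U : 'I_d -> {RV P >-> R}) (w : T) : 'cV[R]_d :=
  \col_i (U i w).

Definition dotv {R : realType} (d : nat) (x y : 'cV[R]_d) : R := (x^T *m y) 0 0.

Definition PR {dT : measure_display} {T : measurableType dT} {R : realType}
  (P : probability T R) (d : nat) (rho : R) (Phi : R -> R)
  (U0 U1 : 'I_d -> {RV P >-> R}) (Pi : 'M[R]_d) (theta : 'cV[R]_d) : R :=
  rho * Rintegral P setT (fun w => Phi (dotv (rvec U1 w) theta))
  + (1 - rho) * Rintegral P setT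
      (fun w => Phi (- dotv (rvec U0 w + Pi *m theta) theta)).

(* Main.v *)
Require Import Defs.
From HB Require Import structures.
From mathcomp Require Import all_boot all_order all_algebra.
From mathcomp Require Import all_classical all_reals all_analysis.
From mathcomp Require Import ring lra.
Import Order.TTheory GRing.Theory Num.Theory.
Local Open Scope ring_scope.

Section Aux.
Context {R : realType} (d : nat).

Lemma dotvDl (a b c : 'cV[R]_d) : dotv (a + b) c = dotv a c + dotv b c.
Proof. by rewrite /dotv linearD /= mulmxDl mxE. Qed.
Lemma dotvZl (k : R) (a c : 'cV[R]_d) : dotv (k *: a) c = k * dotv a c.
Proof. by rewrite /dotv linearZ /= -scalemxAl mxE. Qed.
Lemma dotvDr (a b c : 'cV[R]_d) : dotv c (a + b) = dotv c a + dotv c b.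
Proof. by rewrite /dotv mulmxDr mxE. Qed.
Lemma dotvZr (k : R) (a c : 'cV[R]_d) : dotv c (k *: a) = k * dotv c a.
Proof. by rewrite /dotv -scalemxAr mxE. Qed.

Lemma quad_ge0 (Pi : 'M[R]_d) v : psd Pi -> 0 <= dotv (Pi *m v) v.
Proof.
move=> h; rewrite /dotv.
have -> : (Pi *m v)^T *m v = (v^T *m Pi *m v)^T by rewrite !trmx_mul trmxK mulmxA.
by rewrite mxE; exact: h.
Qed.

Lemma dotvBl (a b c : 'cV[R]_d) : dotv (a - b) c = dotv a c - dotv b c.
Proof. by rewrite dotvDl -scaleN1r dotvZl mulN1r. Qed.
Lemma dotvBr (a b c : 'cV[R]_d) : dotv c (a - b) = dotv c a - dotv c b.
Proof. by rewrite dotvDr -scaleN1r dotvZr mulN1r. Qed.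

End Aux.

Lemma phi_comp_concave {R : realType} (d : nat) (Phi : R -> R) (h : 'cV[R]_d -> R) :
  convex_real_fun Phi -> noninc_real_fun Phi ->
  (forall x y t, 0 <= t -> t <= 1 ->
     t * h x + (1 - t) * h y <= h (t *: x + (1 - t) *: y)) ->
  convex_on_Rd (fun th => Phi (h th)).
Proof.
move=> hc hd hh x y t t0 t1.
apply: le_trans (hc _ _ _ t0 t1).
exact: hd (hh _ _ _ t0 t1).
Qed.

Lemma int_convex (dT : measure_display) (T : measurableType dT) (R : realType)
  (P : probability T R) (d : nat) (F : 'cV[R]_d -> T -> R)
  (hint : forall th, P.-integrable setT (fun w => (F th w)%:E))
  (hc : forall w, convex_on_Rd (fun th => F th w)) :
  convex_on_Rd (fun th => Rintegral P setT (F th)).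
Proof.
move=> x y t t0 t1.
have ix := hint x; have iy := hint y.
have iZx : P.-integrable setT (EFin \o (fun w => t * F x w)).
  by apply: (eq_integrable measurableT _ _ _ (integrableZl measurableT t ix)) => w _ /=; rewrite EFinM.
have iZy : P.-integrable setT (EFin \o (fun w => (1 - t) * F y w)).
  by apply: (eq_integrable measurableT _ _ _ (integrableZl measurableT (1 - t) iy)) => w _ /=; rewrite EFinM.
have iS : P.-integrable setT
    (EFin \o (fun w => t * F x w + (1 - t) * F y w)).
  by apply: (eq_integrable measurableT _ _ _ (integrableD measurableT iZx iZy)) => w _ /=; rewrite EFinD.
rewrite -RintegralZl // -(RintegralZl (f := F y)) // -RintegralD //.
apply: le_Rintegral => //.
  exact: hint.
by move=> w _; apply: hc.
Qed.

Theorem theorem2 (dT : measure_display) (T : measurableType dT) (R : realType)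
  (P : probability T R) (d : nat) (rho : R) (Phi : R -> R)
  (U0 U1 : 'I_d -> {RV P >-> R}) (Pi : 'M[R]_d)
  (hrho0 : 0 <= rho) (hrho1 : rho <= 1)
  (hPi : psd Pi) (hconv : convex_real_fun Phi) (hdec : noninc_real_fun Phi)
  (hint1 : forall theta : 'cV[R]_d,
     P.-integrable setT (fun w => (Phi (dotv (rvec U1 w) theta))%:E))
  (hint0 : forall theta : 'cV[R]_d,
     P.-integrable setT
       (fun w => (Phi (- dotv (rvec U0 w + Pi *m theta) theta))%:E)) :
  convex_on_Rd (PR rho Phi U0 U1 Pi).
Proof.
have c1 := @int_convex _ _ _ P d (fun th w => Phi (dotv (rvec U1 w) th)) hint1.
have c0 := @int_convex _ _ _ P d (fun th w => Phi (- dotv (rvec U0 w + Pi *m th) th)) hint0.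
have {c1}c1 : convex_on_Rd (fun th =>
    Rintegral P setT (fun w => Phi (dotv (rvec U1 w) th))).
  apply: c1 => w; apply: phi_comp_concave => // x y t _ _.
  by rewrite dotvDr !dotvZr.
have {c0}c0 : convex_on_Rd (fun th =>
    Rintegral P setT (fun w => Phi (- dotv (rvec U0 w + Pi *m th) th))).
  apply: c0 => w; apply: phi_comp_concave => // x y t t0 t1.
  have q := @quad_ge0 R d Pi (x - y) hPi.
  rewrite mulmxBr !dotvBl !dotvBr in q.
  rewrite mulmxDr -!scalemxAr.
  rewrite !(dotvDl, dotvDr, dotvZl, dotvZr).
  set u := rvec U0 w.
  set a := dotv (Pi *m x) x in q *; set b := dotv (Pi *m x) y in q *.
  set c := dotv (Pi *m y) x in q *; set e := dotv (Pi *m y) y in q *.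
  set ux := dotv u x; set uy := dotv u y.
  have tt : 0 <= t * (1 - t) by apply: mulr_ge0; lra.
  have := mulr_ge0 tt q.
  nra.
move=> x y t t0 t1; rewrite /PR.
have h1 := c1 x y t t0 t1; have h0 := c0 x y t t0 t1.
have r0 : 0 <= 1 - rho by lra.
have := ler_wpM2l hrho0 h1; have := ler_wpM2l r0 h0.
lra.
Qed.
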